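(* Let $n$ and $e$ be positive integers, let $s \in \{1,2,3\}$, and let $S = \{m_1,\dots,m_e\}$ be a set of integers which is a Sidon-type set of strength $s$ in $\mathbb{Z}_n$. Let $A = A(S)$ be the $2e \times n$ matrix whose rows are, in order, $s(m_1), c(m_1), s(m_2), c(m_2), \dots, s(m_e), c(m_e)$. If $f:\mathbb{R}^{2e}\to\mathbb{R}$ is a polynomial with $f \in \Phi_s$ (with respect to the variables $x_0,\dots,x_{2e-1}$), then $f(A) = 0$.
   Context: For an integer $m$, $s(m), c(m) \in \mathbb{R}^n$ are the vectors $s(m) = \big(\sin(\tfrac{2\pi}{n} km)\big)_{k=1}^n$ and $c(m) = \big(\cos(\tfrac{2\pi}{n} km)\big)_{k=1}^n$. For a matrix $U$ with columns $u_1,\dots,u_n \in \mathbb{R}^{D+1}$ and a polynomial $f(x_0,\dots,x_D)$, $f(U) = \sum_{k=1}^n f(u_k)$. In variables $x_0,\dots,x_D$: $\Phi_1 = \{x_i : 0\le i\le D\}$; $\Phi_2 = \{x_ix_j : 0\le i<j\le D\} \cup \{x_i^2 - x_{i+1}^2 : 0 \le i \le D-1\}$; $\Phi_3 = \{x_ix_jx_k : 0\le i<j<k\le D\}\cup\{x_i^3 - 3x_ix_j^2 : 0\le i\ne j\le D\}$. A set $S$ of integers is a Sidon-type set of strength $t$ in $\mathbb{Z}_n$ if no non-trivial sum $\varepsilon_1x_1+\cdots+\varepsilon_tx_t$ with $\varepsilon_i\in\{0,\pm1\}$ and $x_i\in S$ (not necessarily distinct) is congruent to $0 \bmod n$; a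 sum is non-trivial if some $\varepsilon_i \ne 0$ and no element of $S$ appears with both coefficient $+1$ and coefficient $-1$. *)

(* Defs.v *)
From HB Require Import structures.
From mathcomp Require Import all_boot all_order all_algebra.
From mathcomp Require Import reals trigo.
Set Implicit Arguments. Unset Strict Implicit. Unset Printing Implicit Defensive.
Import Order.TTheory GRing.Theory Num.Theory.
Local Open Scope ring_scope.

(* s(m) = (sin(2 pi k m / n))_{k=1..n}; the column index k : 'I_n stands for k+1. *)
Definition s_vec (R : realType) (n : nat) (m : int) : 'rV[R]_n :=
  \row_(k < n) sin ((2 * pi / n%:R) * ((k.+1)%:R * m%:~R)).
Definition c_vec (R : realType) (n : nat) (m : int) : 'rV[R]_n :=
  \row_(k < n) cos ((2 * pi / n%:R) * ((k.+1)%:R * m%:~R)).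

(* A(S) for S = {m_1,...,m_e} given as the sequence ms = [:: m_1; ...; m_e]:
   row 2j is s(m_{j+1}), row 2j+1 is c(m_{j+1}). *)
Definition A_mat (R : realType) (n : nat) (ms : seq int) : 'M[R]_(2 * size ms, n) :=
  \matrix_(r < 2 * size ms, k < n)
     (if odd r then c_vec R n (nth 0 ms r./2) 0 k
               else s_vec R n (nth 0 ms r./2) 0 k).

Definition evalU (R : realType) (d n : nat) (f : ('I_d -> R) -> R) (U : 'M[R]_(d, n)) : R :=
  \sum_(k < n) f (fun i => U i k).

Definition Phi (R : realType) (s d : nat) (f : ('I_d -> R) -> R) : Prop :=
  match s with
  | 1%N => exists i : 'I_d, f = fun x => x i
  | 2%N => (exists i j : 'I_d, (i < j)%N /\ f = fun x => x i * x j)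
        \/ (exists i j : 'I_d, val j = (val i).+1 /\ f = fun x => x i ^+ 2 - x j ^+ 2)
  | 3%N => (exists i j k : 'I_d, (i < j)%N /\ (j < k)%N /\ f = fun x => x i * x j * x k)
        \/ (exists i j : 'I_d, i != j /\ f = fun x => x i ^+ 3 - 3 * x i * x j ^+ 2)
  | _ => False
  end.

Definition sidon_type (S : pred int) (n t : nat) : Prop :=
  forall (x : 'I_t -> int) (eps : 'I_t -> int),
    (forall i, S (x i)) ->
    (forall i, eps i \in [:: -1; 0; 1]) ->
    (exists i, eps i != 0) ->
    (forall i j, x i = x j -> ~ (eps i = 1 /\ eps j = -1)) ->
    ~ (n%:Z %| \sum_(i < t) eps i * x i)%Z.

(* Main.v *)
Require Import Defs.
From HB Require Import structures.
From mathcomp Require Import all_boot all_order all_algebra.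
From mathcomp Require Import reals trigo.
From mathcomp Require Import ring lra zify.
Import Order.TTheory GRing.Theory Num.Theory.
Local Open Scope ring_scope.

Section S.
Variables (R : realType) (n : nat).
Hypothesis hn : (0 < n)%N.

Definition ang (k : nat) (M : int) : R := (2 * pi / n%:R) * ((k.+1)%:R * M%:~R).

Lemma angD k a b : ang k (a + b) = ang k a + ang k b.
Proof. rewrite /ang intrD; ring. Qed.
Lemma angN k a : ang k (- a) = - ang k a.
Proof. rewrite /ang intrN; ring. Qed.
Lemma ang0 k : ang k 0 = 0.
Proof. by rewrite /ang mulr0 mulr0. Qed.

Lemma cos2piz (y : R) (z : int) : cos (y + 2 * pi * z%:~R) = cos y.
Proof.
case: z => k.
  have -> : 2 * pi * (Posz k)%:~R = (pi *+ 2) *+ k :> R.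
    by rewrite -mulr_natr /= -[pi *+ 2]mulr_natr; ring.
  exact: (periodicn (@cosD2pi R) k y).
rewrite NegzE intrN.
set y' := (y + _).
have -> : y = y' + (pi *+ 2) *+ k.+1.
  by rewrite /y' -mulr_natr -[pi *+ 2]mulr_natr; ring.
by rewrite (periodicn (@cosD2pi R)).
Qed.

Lemma sum_cos_nat (r : nat) (phi : R) : (0 < r < n)%N ->
  \sum_(k < n) cos (ang k (Posz r) + phi) = 0.
Proof.
move=> /andP[r0 rn].
set x : R := 2 * pi / n%:R * r%:R.
have nR : (n%:R : R) != 0 by rewrite pnatr_eq0 -lt0n.
have angE k : ang k (Posz r) = k.+1%:R * x by rewrite /ang /x /=; ring.
pose g (j : nat) := sin (j%:R * x + x / 2 + phi).
have H k : 2 * sin (x / 2) * cos (ang k (Posz r) + phi) = g k.+1 - g k.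
  rewrite angE /g.
  have -> : k.+1%:R * x + x / 2 + phi = (k.+1%:R * x + phi) + x / 2.
    ring.
  have -> : k%:R * x + x / 2 + phi = (k.+1%:R * x + phi) - x / 2.
    by rewrite -addn1 natrD; field.
  rewrite (sinD (k.+1%:R * x + phi)) (sinB (k.+1%:R * x + phi)); ring.
have Hs : 2 * sin (x / 2) * \sum_(k < n) cos (ang k (Posz r) + phi) = 0.
  rewrite mulr_sumr; under eq_bigr => k _ do rewrite H.
  rewrite -(big_mkord xpredT (fun k => g k.+1 - g k)) telescope_sumr //.
  rewrite /g.
  have -> : n%:R * x + x / 2 + phi = (x / 2 + phi) + (pi *+ 2) *+ r.
    by rewrite /x -mulr_natr -[pi *+ 2]mulr_natr; field; rewrite ?nR.
  rewrite (periodicn (@sinD2pi R)).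
  by rewrite mul0r add0r subrr.
have sx : 0 < sin (x / 2).
  apply: sin_gt0_pi.
  have -> : x / 2 = pi * (r%:R / n%:R) by rewrite /x; field.
  have rR : 0 < (r%:R : R) by rewrite ltr0n.
  have nR' : 0 < (n%:R : R) by rewrite ltr0n.
  apply/andP; split.
    by rewrite mulr_gt0 ?pi_gt0 // divr_gt0.
  rewrite -[X in _ < X]mulr1 ltr_pM2l ?pi_gt0 // ltr_pdivrMr // mul1r ltr_nat //.
move: Hs => /eqP; rewrite mulf_eq0 mulf_eq0 pnatr_eq0 /= => /orP[|/eqP //].
by rewrite (gt_eqF sx).
Qed.

Lemma sum_cos0 (M : int) (phi : R) : ~~ (n%:Z %| M)%Z ->
  \sum_(k < n) cos (ang k M + phi) = 0.
Proof.
move=> ndM.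
have nR : (n%:R : R) != 0 by rewrite pnatr_eq0 -lt0n.
set q := (M %/ n)%Z; set r := (M %% n)%Z.
have r0 : 0 <= r by apply: modz_ge0; rewrite eqz_nat -lt0n.
have rn : r < n%:Z by apply: ltz_pmod; rewrite ltz_nat.
have rne : r != 0 by apply: contra ndM => /eqP h; apply/dvdz_mod0P.
have [r' er] : exists r' : nat, r = Posz r' by exists `|r|%N; rewrite gez0_abs.
transitivity (\sum_(k < n) cos (ang k (Posz r') + phi)).
  apply: eq_bigr => k _.
  have -> : ang k M + phi = (ang k (Posz r') + phi) + 2 * pi * ((k.+1)%:Z * q)%:~R.
    rewrite {1}(divz_eq M n) -/q -/r er /ang intrM intrD !intrM /= !pmulrn.
    by field; rewrite ?nR.
  by rewrite cos2piz.
apply: sum_cos_nat; rewrite er in r0 rn rne; apply/andP; split; lia.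
Qed.

Lemma prod2 (A B : R) : cos A * cos B = 1/2 * (cos (A + B) + cos (A - B)).
Proof. by rewrite cosD cosB; field. Qed.

Lemma prod3 (A B C : R) : cos A * cos B * cos C =
  1/4 * (cos (A + B + C) + cos (A + B - C) + cos (A - B + C) + cos (A - B - C)).
Proof.
have h1 := prod2 (A + B) C; have h2 := prod2 (A - B) C.
by rewrite prod2 -[_ * _ * cos C]mulrA mulrDl h1 h2; field.
Qed.

Lemma cc2 k a b (p q : R) : cos (ang k a + p) * cos (ang k b + q) =
  1/2 * (cos (ang k (a + b) + (p + q)) + cos (ang k (a - b) + (p - q))).
Proof.
rewrite prod2; congr (_ * (cos _ + cos _)); rewrite ?angD ?angN; ring.
Qed.

Lemma cc3 k a b c (p q r : R) :
  cos (ang k a + p) * cos (ang k b + q) * cos (ang k c + r) =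
  1/4 * (cos (ang k (a + b + c) + (p + q + r)) + cos (ang k (a + b - c) + (p + q - r))
       + cos (ang k (a - b + c) + (p - q + r)) + cos (ang k (a - b - c) + (p - q - r))).
Proof.
rewrite prod3; congr (_ * (cos _ + cos _ + cos _ + cos _)); rewrite ?angD ?angN; ring.
Qed.
End S.

Definition L3 : seq int := [:: -1; 0; 1].

Lemma sid1 (S : pred int) n M a e1 : sidon_type S n 1 -> M = e1 * a -> S a ->
  e1 \in L3 -> e1 != 0 -> ~~ (n%:Z %| M)%Z.
Proof.
move=> HS EM Sa e1L nz; apply/negP => hd.
pose x (i : 'I_1) := a. pose eps (i : 'I_1) := e1.
apply: (HS x eps) => //.
- by exists ord0.
- by move=> i j _ []; rewrite /eps => ->.
by rewrite big_ord1 -EM.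
Qed.

Lemma sid2 (S : pred int) n M a b e1 e2 : sidon_type S n 2 -> M = e1 * a + e2 * b ->
  S a -> S b -> e1 \in L3 -> e2 \in L3 -> (e1 != 0) || (e2 != 0) ->
  (e1 == 1) && (e2 == -1) ==> (a != b) -> (e2 == 1) && (e1 == -1) ==> (a != b) ->
  ~~ (n%:Z %| M)%Z.
Proof.
move=> HS EM Sa Sb e1L e2L nz c12 c21; apply/negP => hd.
pose x (i : 'I_2) := nth 0 [:: a; b] i. pose eps (i : 'I_2) := nth 0 [:: e1; e2] i.
apply: (HS x eps).
- by case=> [[|[|//]]] ?.
- by case=> [[|[|//]]] ?.
- by case/orP: nz => ?; [exists ord0 | exists (Ordinal (isT : (1 < 2)%N))].
- move=> [[|[|//]]] ? [[|[|//]]] ? Exy; rewrite /x /eps /= in Exy *; case=> E1 E2.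
  + by move: E2; rewrite E1.
  + by move: c12; rewrite E1 E2 Exy !eqxx.
  + by move: c21; rewrite E1 E2 Exy !eqxx.
  + by move: E2; rewrite E1.
by rewrite !big_ord_recr big_ord0 /= add0r -EM.
Qed.

Lemma sid3 (S : pred int) n M a b c e1 e2 e3 : sidon_type S n 3 ->
  M = e1 * a + e2 * b + e3 * c ->
  S a -> S b -> S c -> e1 \in L3 -> e2 \in L3 -> e3 \in L3 ->
  [|| e1 != 0, e2 != 0 | e3 != 0] ->
  (e1 == 1) && (e2 == -1) ==> (a != b) -> (e2 == 1) && (e1 == -1) ==> (a != b) ->
  (e1 == 1) && (e3 == -1) ==> (a != c) -> (e3 == 1) && (e1 == -1) ==> (a != c) ->
  (e2 == 1) && (e3 == -1) ==> (b != c) -> (e3 == 1) && (e2 == -1) ==> (b != c) ->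
  ~~ (n%:Z %| M)%Z.
Proof.
move=> HS EM Sa Sb Sc e1L e2L e3L nz c12 c21 c13 c31 c23 c32; apply/negP => hd.
pose x (i : 'I_3) := nth 0 [:: a; b; c] i.
pose eps (i : 'I_3) := nth 0 [:: e1; e2; e3] i.
apply: (HS x eps).
- by case=> [[|[|[|//]]]] ?.
- by case=> [[|[|[|//]]]] ?.
- case/or3P: nz => ?; [exists ord0 | exists (Ordinal (isT : (1 < 3)%N))
                      | exists (Ordinal (isT : (2 < 3)%N))] => //.
- move=> [[|[|[|//]]]] ? [[|[|[|//]]]] ? Exy; rewrite /x /eps /= in Exy *; case=> E1 E2;
  first [ by move: E2; rewrite E1
        | by move: c12; rewrite E1 E2 Exy !eqxx
        | by move: c21; rewrite E1 E2 Exy !eqxx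
        | by move: c13; rewrite E1 E2 Exy !eqxx
        | by move: c31; rewrite E1 E2 Exy !eqxx
        | by move: c23; rewrite E1 E2 Exy !eqxx
        | by move: c32; rewrite E1 E2 Exy !eqxx ].
by rewrite !big_ord_recr big_ord0 /= add0r -EM.
Qed.

Lemma half_gap (i k : nat) : i./2 = k./2 -> (k <= i.+1)%N.
Proof.
move=> E; have := odd_double_half i; have := odd_double_half k.
rewrite -!muln2 E; case: (odd i); case: (odd k) => /=; lia.
Qed.

Lemma half_par (i j : nat) : i./2 = j./2 -> (i < j)%N -> ~~ odd i /\ odd j.
Proof.
move=> E lt; have := odd_double_half i; have := odd_double_half j.
rewrite -!muln2 E; case: (odd i); case: (odd j) => /=; lia.
Qed.


Ltac s3 hsid a b c e1 e2 e3 :=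
  apply: (@sid3 _ _ _ a b c (e1:int) (e2:int) (e3:int) hsid);
  rewrite /= ?eqxx //=; try ring.
Ltac s2 hsid a b e1 e2 :=
  apply: (@sid2 _ _ _ a b (e1:int) (e2:int) hsid);
  rewrite /= ?eqxx //=; try ring.

Theorem lemma5p1 (R : realType) (n e s : nat) (ms : seq int)
  (hn : (0 < n)%N) (he : (0 < e)%N) (hs : s \in [:: 1%N; 2%N; 3%N])
  (hsize : size ms = e) (huniq : uniq ms)
  (hsidon : sidon_type (fun z => z \in ms) n s)
  (f : ('I_(2 * size ms) -> R) -> R) (hf : Phi s f) :
  evalU f (A_mat R n ms) = 0.
Proof.
rewrite /evalU.
pose mm (i : 'I_(2 * size ms)) := nth 0 ms i./2.
pose ph (i : 'I_(2 * size ms)) : R := if odd i then 0 else - (pi / 2).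
have Ent i k : A_mat R n ms i k = cos (ang R n k (mm i) + ph i).
  rewrite /A_mat /s_vec /c_vec !mxE /ph /mm /ang.
  by case: (odd i); rewrite ?addr0 ?cosBpihalf.
have hlt (i : 'I_(2 * size ms)) : (i./2 < size ms)%N.
  by rewrite ltn_half_double -mul2n.
have Mm i : mm i \in ms by apply: mem_nth.
have Dm (i j : 'I_(2 * size ms)) : i./2 != j./2 -> mm i != mm j.
  by move=> h; rewrite /mm nth_uniq.
move: hs hsidon hf; case: s => [|[|[|[|s]]]] // _ hsid hf.
-
  case: hf => i ->.
  under eq_bigr => k _ do rewrite /= Ent.
  apply: sum_cos0 => //.
  by apply: (@sid1 _ _ _ (mm i) 1 hsid); rewrite ?mul1r.
-
  case: hf => [[i [j [lt ->]]] | [i [j [ej ->]]]].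
  + have P k : A_mat R n ms i k * A_mat R n ms j k =
      1/2 * (cos (ang R n k (mm i + mm j) + (ph i + ph j))
           + cos (ang R n k (mm i - mm j) + (ph i - ph j))).
      by rewrite !Ent cc2.
    under eq_bigr => k _ do rewrite /= P.
    rewrite -mulr_sumr big_split /=.
    have N1 : ~~ (n%:Z %| mm i + mm j)%Z by s2 hsid (mm i) (mm j) (1:int) (1:int).
    rewrite (sum_cos0 _ _ hn _ _ N1) add0r.
    have [h|h] := boolP (i./2 == j./2).
    * have [oi oj] := @half_par i j (eqP h) lt.
      have -> : mm i = mm j by rewrite /mm (eqP h).
      rewrite big1 ?mulr0 // => k _.
      by rewrite subrr ang0 add0r /ph (negbTE oi) oj subr0 cosN cos_pihalf.
    * have N2 : ~~ (n%:Z %| mm i - mm j)%Z.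
        by s2 hsid (mm i) (mm j) (1:int) (-1:int); exact: Dm.
      by rewrite (sum_cos0 _ _ hn _ _ N2) mulr0.
  + have P k : A_mat R n ms i k ^+ 2 - A_mat R n ms j k ^+ 2 =
      1/2 * (cos (ang R n k (mm i + mm i) + (ph i + ph i))
           - cos (ang R n k (mm j + mm j) + (ph j + ph j))).
      by rewrite !Ent !expr2 !cc2 !subrr !ang0 !add0r; ring.
    under eq_bigr => k _ do rewrite /= P.
    have N1 : ~~ (n%:Z %| mm i + mm i)%Z by s2 hsid (mm i) (mm i) (1:int) (1:int).
    have N2 : ~~ (n%:Z %| mm j + mm j)%Z by s2 hsid (mm j) (mm j) (1:int) (1:int).
    by rewrite -mulr_sumr sumrB (sum_cos0 _ _ hn _ _ N1) (sum_cos0 _ _ hn _ _ N2) subrr mulr0.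
-
  case: hf => [[i [j [k [lij [ljk ->]]]]] | [i [j [nij ->]]]].
  + have P kk : A_mat R n ms i kk * A_mat R n ms j kk * A_mat R n ms k kk =
      1/4 * (cos (ang R n kk (mm i + mm j + mm k) + (ph i + ph j + ph k))
           + cos (ang R n kk (mm i + mm j - mm k) + (ph i + ph j - ph k))
           + cos (ang R n kk (mm i - mm j + mm k) + (ph i - ph j + ph k))
           + cos (ang R n kk (mm i - mm j - mm k) + (ph i - ph j - ph k))).
      by rewrite !Ent cc3.
    under eq_bigr => kk _ do rewrite /= P.
    have hik : i./2 != k./2.
      by apply/negP => /eqP h; have := @half_gap i k h; lia.
    have Ac : mm i != mm k := Dm _ _ hik.
    have N1 : ~~ (n%:Z %| mm i + mm j + mm k)%Z
      by s3 hsid (mm i) (mm j) (mm k) (1:int) (1:int) (1:int).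
    suff [N2 N3 N4] : [/\ ~~ (n%:Z %| mm i + mm j - mm k)%Z,
                           ~~ (n%:Z %| mm i - mm j + mm k)%Z &
                           ~~ (n%:Z %| mm i - mm j - mm k)%Z].
      by rewrite -mulr_sumr !big_split /= !(sum_cos0 _ _ hn) // !addr0 mulr0.
    have [hij|hij] := boolP (i./2 == j./2).
    * have eab : mm i = mm j by rewrite /mm (eqP hij).
      have hjk : j./2 != k./2 by apply: contra hik => /eqP h; rewrite (eqP hij) h.
      have Bc := Dm _ _ hjk.
      rewrite -eab in Bc *.
      split.
      - by s3 hsid (mm i) (mm i) (mm k) (1:int) (1:int) (-1:int).
      - by s3 hsid (mm i) (mm i) (mm k) (0:int) (0:int) (1:int).
      - by s3 hsid (mm i) (mm i) (mm k) (0:int) (0:int) (-1:int).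
    * have Ab := Dm _ _ hij.
      have [hjk|hjk] := boolP (j./2 == k./2).
      - have ebc : mm j = mm k by rewrite /mm (eqP hjk).
        rewrite -ebc in Ac *.
        split.
        + by s3 hsid (mm i) (mm j) (mm j) (1:int) (0:int) (0:int).
        + by s3 hsid (mm i) (mm j) (mm j) (1:int) (0:int) (0:int).
        + by s3 hsid (mm i) (mm j) (mm j) (1:int) (-1:int) (-1:int).
      - have Bc := Dm _ _ hjk.
        split.
        + by s3 hsid (mm i) (mm j) (mm k) (1:int) (1:int) (-1:int).
        + by s3 hsid (mm i) (mm j) (mm k) (1:int) (-1:int) (1:int).
        + by s3 hsid (mm i) (mm j) (mm k) (1:int) (-1:int) (-1:int).
  + have P kk : A_mat R n ms i kk ^+ 3 - 3 * A_mat R n ms i kk * A_mat R n ms j kk ^+ 2 =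
      cos (ang R n kk (mm i) + ph i) * cos (ang R n kk (mm i) + ph i)
        * cos (ang R n kk (mm i) + ph i)
      - 3 * (cos (ang R n kk (mm i) + ph i) * cos (ang R n kk (mm j) + ph j)
        * cos (ang R n kk (mm j) + ph j)).
      by rewrite !Ent; ring.
    under eq_bigr => kk _ do rewrite /= P !cc3.
    have N1 : ~~ (n%:Z %| mm i + mm i + mm i)%Z
      by s3 hsid (mm i) (mm i) (mm i) (1:int) (1:int) (1:int).
    have N2 : ~~ (n%:Z %| mm i + mm i - mm i)%Z
      by s3 hsid (mm i) (mm i) (mm i) (1:int) (0:int) (0:int).
    have N3 : ~~ (n%:Z %| mm i - mm i + mm i)%Z
      by s3 hsid (mm i) (mm i) (mm i) (1:int) (0:int) (0:int).
    have N4 : ~~ (n%:Z %| mm i - mm i - mm i)%Z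
      by s3 hsid (mm i) (mm i) (mm i) (-1:int) (0:int) (0:int).
    have N5 : ~~ (n%:Z %| mm i + mm j + mm j)%Z
      by s3 hsid (mm i) (mm j) (mm j) (1:int) (1:int) (1:int).
    have N6 : ~~ (n%:Z %| mm i + mm j - mm j)%Z
      by s3 hsid (mm i) (mm j) (mm j) (1:int) (0:int) (0:int).
    have N7 : ~~ (n%:Z %| mm i - mm j + mm j)%Z
      by s3 hsid (mm i) (mm j) (mm j) (1:int) (0:int) (0:int).
    have N8 : ~~ (n%:Z %| mm i - mm j - mm j)%Z.
      have [hij|hij] := boolP (i./2 == j./2).
      * have eab : mm i = mm j by rewrite /mm (eqP hij).
        rewrite -eab.
        by s3 hsid (mm i) (mm i) (mm i) (-1:int) (0:int) (0:int).
      * have Ab := Dm _ _ hij.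
        by s3 hsid (mm i) (mm j) (mm j) (1:int) (-1:int) (-1:int).
    by rewrite sumrB -!mulr_sumr !big_split /= !(sum_cos0 _ _ hn) // !addr0 !mulr0 subr0.
Qed.
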